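(* Let $\Gamma$ be a set of axioms. Then $\mathsf{ICK}\oplus\Gamma$ is sound and complete with respect to the class of general frames that validate $\Gamma$.
   Context: Formulas are generated by $\phi ::= p\mid\bot\mid\phi\wedge\phi\mid\phi\vee\phi\mid\phi\to\phi\mid\phi\mathrel{\Box\!\!\!\rightarrow}\phi$. $\mathsf{ICK}\oplus\Gamma$ is the smallest set of formulas containing intuitionistic propositional logic, $\Gamma$, $(p\mathrel{\Box\!\!\!\rightarrow}(q\wedge r))\leftrightarrow((p\mathrel{\Box\!\!\!\rightarrow} q)\wedge(p\mathrel{\Box\!\!\!\rightarrow} r))$ and $(p\mathrel{\Box\!\!\!\rightarrow}\top)\leftrightarrow\top$, closed under uniform substitution, modus ponens, and the congruence rules for both arguments of $\mathrel{\Box\!\!\!\rightarrow}$. A general frame is $(X,\leq,\mathcal{R},A)$ with $(X,\leq)$ a poset, $A$ a collection of upsets containing $X,\emptyset$ and closed under $\cap,\cup$, $a\to b=\{x\mid{\uparrow}x\cap a\subseteq b\}$ and $a\Rightarrow_c b=\{x\mid R_a[x]\subseteq b\}$, and $\mathcal{R}=\{R_a\mid a\in A\}$ relations with $(\leq\circ R_a)\subseteq(R_a\circ\leq)$. Validity is with respect to valuations into $A$, with $x\models\phi\mathrel{\Box\!\!\!\rightarrow}\psi$ iff every $y$ with $xR_{V(\phi)}y$ satisfies $\psi$. *)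

(* Defs.v *)
Inductive form : Type :=
| Var : nat -> form
| Bot : form
| And : form -> form -> form
| Or  : form -> form -> form
| Imp : form -> form -> form
| Cond : form -> form -> form.

Definition Top : form := Imp Bot Bot.
Definition Iff (a b : form) : form := And (Imp a b) (Imp b a).

Fixpoint subst (s : nat -> form) (f : form) : form :=
  match f with
  | Var n => s n
  | Bot => Bot
  | And a b => And (subst s a) (subst s b)
  | Or a b => Or (subst s a) (subst s b)
  | Imp a b => Imp (subst s a) (subst s b)
  | Cond a b => Cond (subst s a) (subst s b)
  end.

Inductive ipc_axiom : form -> Prop :=
| ipc_K  : forall a b, ipc_axiom (Imp a (Imp b a))
| ipc_S  : forall a b c,
    ipc_axiom (Imp (Imp a (Imp b c)) (Imp (Imp a b) (Imp a c)))
| ipc_AndI  : forall a b, ipc_axiom (Imp a (Imp b (And a b)))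
| ipc_AndE1 : forall a b, ipc_axiom (Imp (And a b) a)
| ipc_AndE2 : forall a b, ipc_axiom (Imp (And a b) b)
| ipc_OrI1  : forall a b, ipc_axiom (Imp a (Or a b))
| ipc_OrI2  : forall a b, ipc_axiom (Imp b (Or a b))
| ipc_OrE   : forall a b c,
    ipc_axiom (Imp (Imp a c) (Imp (Imp b c) (Imp (Or a b) c)))
| ipc_Bot   : forall a, ipc_axiom (Imp Bot a).

Definition p0 := Var 0.
Definition p1 := Var 1.
Definition p2 := Var 2.

Inductive ICK (Gamma : form -> Prop) : form -> Prop :=
| ICK_ipc : forall f, ipc_axiom f -> ICK Gamma f
| ICK_Gamma : forall f, Gamma f -> ICK Gamma f
| ICK_C : ICK Gamma (Iff (Cond p0 (And p1 p2)) (And (Cond p0 p1) (Cond p0 p2)))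
| ICK_N : ICK Gamma (Iff (Cond p0 Top) Top)
| ICK_subst : forall s f, ICK Gamma f -> ICK Gamma (subst s f)
| ICK_mp : forall a b, ICK Gamma (Imp a b) -> ICK Gamma a -> ICK Gamma b
| ICK_congL : forall a b c, ICK Gamma (Iff a b) ->
    ICK Gamma (Iff (Cond a c) (Cond b c))
| ICK_congR : forall a b c, ICK Gamma (Iff a b) ->
    ICK Gamma (Iff (Cond c a) (Cond c b)).

Record gframe : Type := {
  W : Type;
  le : W -> W -> Prop;
  adm : (W -> Prop) -> Prop;
  R : (W -> Prop) -> W -> W -> Prop;
  le_refl : forall x, le x x;
  le_trans : forall x y z, le x y -> le y z -> le x z;
  le_antisym : forall x y, le x y -> le y x -> x = y;
  adm_upset : forall a, adm a -> forall x y, le x y -> a x -> a y;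
  adm_full : adm (fun _ => True);
  adm_empty : adm (fun _ => False);
  adm_inter : forall a b, adm a -> adm b -> adm (fun x => a x /\ b x);
  adm_union : forall a b, adm a -> adm b -> adm (fun x => a x \/ b x);
  adm_imp : forall a b, adm a -> adm b ->
     adm (fun x => forall y, le x y -> a y -> b y);
  adm_cond : forall a b, adm a -> adm b ->
     adm (fun x => forall y, R a x y -> b y);
  (* (<= ∘ R_a) ⊆ (R_a ∘ <=), composition read diagrammatically *)
  R_compat : forall a, adm a -> forall x x' y,
     le x x' -> R a x' y -> exists y', R a x y' /\ le y' y
}.

Fixpoint interp (F : gframe) (V : nat -> W F -> Prop) (f : form) : W F -> Prop :=
  match f with
  | Var n => V n
  | Bot => fun _ => False
  | And a b => fun x => interp F V a x /\ interp F V b x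
  | Or a b => fun x => interp F V a x \/ interp F V b x
  | Imp a b => fun x => forall y, le F x y -> interp F V a y -> interp F V b y
  | Cond a b => fun x => forall y, R F (interp F V a) x y -> interp F V b y
  end.

Definition valuation (F : gframe) (V : nat -> W F -> Prop) : Prop :=
  forall n, adm F (V n).

Definition valid (F : gframe) (f : form) : Prop :=
  forall V, valuation F V -> forall x, interp F V f x.

Definition validates (F : gframe) (Gamma : form -> Prop) : Prop :=
  forall f, Gamma f -> valid F f.

(* Main.v *)
Require Import Defs.
From Stdlib Require Import Classical ClassicalEpsilon FunctionalExtensionality PropExtensionality ProofIrrelevance Arith Lia Cantor.

Lemma interp_adm (F : gframe) V : valuation F V -> forall f, adm F (interp F V f).
Proof.
  intros HV f; induction f; simpl.
  - apply HV.
  - apply adm_empty.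
  - apply adm_inter; auto.
  - apply adm_union; auto.
  - apply adm_imp; auto.
  - apply adm_cond; auto.
Qed.

Lemma persist (F : gframe) V (HV : valuation F V) f x y :
  le F x y -> interp F V f x -> interp F V f y.
Proof. intros; eapply adm_upset; eauto using interp_adm. Qed.

Lemma interp_subst F V s f :
  interp F V (subst s f) = interp F (fun n => interp F V (s n)) f.
Proof. induction f; simpl; try rewrite IHf1, IHf2; reflexivity. Qed.

Lemma valid_iff_eq F a b : valid F (Iff a b) -> forall V, valuation F V ->
  interp F V a = interp F V b.
Proof.
  intros H V HV. extensionality x. apply propositional_extensionality.
  destruct (H V HV x) as [H1 H2]. split; [apply H1|apply H2]; apply le_refl.
Qed.

Lemma sound Gamma f : ICK Gamma f -> forall F, validates F Gamma -> valid F f.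
Proof.
  induction 1; intros F HF.
  - destruct H; intros V HV x; simpl.
    + intros y _ Ha z Hyz _. eapply persist; eauto.
    + intros y _ H1 z Hyz H2 w Hzw Ha.
      apply (H1 w (le_trans F _ _ _ Hyz Hzw) Ha w (le_refl F w)).
      apply H2; auto.
    + intros y _ Ha z Hyz Hb. split; auto. eapply persist; eauto.
    + intros y _ [Ha Hb]; auto.
    + intros y _ [Ha Hb]; auto.
    + intros y _ Ha; auto.
    + intros y _ Ha; auto.
    + intros y _ H1 z Hyz H2 w Hzw [Ha|Hb].
      * apply (H1 w (le_trans F _ _ _ Hyz Hzw) Ha).
      * apply (H2 w Hzw Hb).
    + intros y _ [].
  - apply HF; auto.
  - intros V HV x; simpl. split.
    + intros y _ H. split; intros z Hz; apply (H z Hz).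
    + intros y _ [H1 H2] z Hz. split; auto.
  - intros V HV x; simpl. split.
    + intros y _ _ w _ [].
    + intros y _ _ z _ w _ [].
  - intros V HV x. rewrite interp_subst. apply IHICK; auto.
    intro n; apply interp_adm; auto.
  - intros V HV x. apply (IHICK1 F HF V HV x x (le_refl F x)).
    apply IHICK2; auto.
  - intros V HV x. pose proof (valid_iff_eq _ _ _ (IHICK F HF) V HV) as E.
    simpl. rewrite E. split; auto.
  - intros V HV x. pose proof (valid_iff_eq _ _ _ (IHICK F HF) V HV) as E.
    simpl. rewrite E. split; auto.
Qed.
Definition theory Gamma (T : form -> Prop) :=
  (forall f, ICK Gamma f -> T f) /\ (forall a b, T (Imp a b) -> T a -> T b).
Definition prime Gamma (T : form -> Prop) :=
  theory Gamma T /\ ~ T Bot /\ (forall a b, T (Or a b) -> T a \/ T b).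

Lemma th_ax Gamma T f : theory Gamma T -> ipc_axiom f -> T f.
Proof. intros [H _] Hf; apply H, ICK_ipc, Hf. Qed.
Lemma th_L Gamma T f : theory Gamma T -> ICK Gamma f -> T f.
Proof. intros [H _] Hf; apply H, Hf. Qed.
Lemma th_mp Gamma T a b : theory Gamma T -> T (Imp a b) -> T a -> T b.
Proof. intros [_ H]; apply H. Qed.

Lemma L_theory Gamma : theory Gamma (ICK Gamma).
Proof. split; auto. intros a b; apply ICK_mp. Qed.

Lemma L_I Gamma a : ICK Gamma (Imp a a).
Proof.
  apply (ICK_mp _ (Imp a (Imp a a))).
  - apply (ICK_mp _ (Imp a (Imp (Imp a a) a))).
    + apply ICK_ipc, ipc_S.
    + apply ICK_ipc, ipc_K.
  - apply ICK_ipc, ipc_K.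
Qed.

Definition ext (T : form -> Prop) a := fun c => T (Imp a c).

Lemma ext_theory Gamma T a : theory Gamma T -> theory Gamma (ext T a).
Proof.
  intros HT; split; unfold ext.
  - intros f Hf. eapply th_mp; [exact HT| |]. eapply th_ax; [exact HT|apply ipc_K].
    eapply th_L; eauto.
  - intros b c H1 H2. eapply th_mp; [exact HT| |exact H2].
    eapply th_mp; [exact HT| |exact H1]. eapply th_ax; [exact HT|apply ipc_S].
Qed.

Lemma ext_self Gamma T a : theory Gamma T -> ext T a a.
Proof. intros HT; unfold ext; eapply th_L; eauto using L_I. Qed.

Lemma ext_sup Gamma T a f : theory Gamma T -> T f -> ext T a f.
Proof.
  intros HT Hf; unfold ext. eapply th_mp; [exact HT| |exact Hf].
  eapply th_ax; [exact HT|apply ipc_K].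
Qed.

Lemma theory_ext Gamma A B : (forall x, A x <-> B x) -> theory Gamma A -> theory Gamma B.
Proof.
  intros E [H1 H2]; split.
  - intros; apply E; auto.
  - intros a b Ha Hb; apply E; apply (H2 a b); apply E; auto.
Qed.

Arguments to_nat : simpl never.
Fixpoint enc (f : form) : nat :=
  match f with
  | Var n => to_nat (0, n)
  | Bot => to_nat (1, 0)
  | And a b => to_nat (2, to_nat (enc a, enc b))
  | Or a b => to_nat (3, to_nat (enc a, enc b))
  | Imp a b => to_nat (4, to_nat (enc a, enc b))
  | Cond a b => to_nat (5, to_nat (enc a, enc b))
  end.

Lemma to_nat_inj p q : to_nat p = to_nat q -> p = q.
Proof. intro H. apply (f_equal of_nat) in H. rewrite !cancel_of_to in H. exact H. Qed.

Lemma enc_inj f : forall g, enc f = enc g -> f = g.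
Proof.
  induction f; destruct g; simpl; intro H; apply to_nat_inj in H;
    try discriminate; inversion H as [[H1]]; subst; auto;
    apply to_nat_inj in H1; inversion H1; f_equal; auto.
Qed.

Definition enum n : form := epsilon (inhabits Bot) (fun f => enc f = n).
Lemma enum_surj f : enum (enc f) = f.
Proof.
  apply enc_inj. unfold enum.
  apply (epsilon_spec (inhabits Bot) (fun g => enc g = enc f)). exists f; auto.
Qed.

Fixpoint chain (T : form -> Prop) (psi : form) (n : nat) : form -> Prop :=
  match n with
  | 0 => T
  | S k => fun x => (ext (chain T psi k) (enum k) psi -> chain T psi k x) /\
                   (~ ext (chain T psi k) (enum k) psi -> ext (chain T psi k) (enum k) x)
  end.

Lemma step Gamma C E psi : theory Gamma C -> ~ C psi -> theory Gamma E -> (forall x, C x -> E x) ->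
  let C' := fun x => (E psi -> C x) /\ (~ E psi -> E x) in
  theory Gamma C' /\ ~ C' psi /\ (forall x, C x -> C' x).
Proof.
  intros HC Hpsi HE Hsub C'. destruct (classic (E psi)) as [He|He].
  - assert (Eq : forall x, C x <-> C' x) by (unfold C'; firstorder).
    split; [eapply theory_ext; eauto|]. split; [intro H; apply Hpsi, Eq, H|]. apply Eq.
  - assert (Eq : forall x, E x <-> C' x) by (unfold C'; firstorder).
    split; [eapply theory_ext; eauto|]. split; [intro H; apply He, Eq, H|].
    intros; apply Eq; auto.
Qed.

Lemma chain_props Gamma T psi : theory Gamma T -> ~ T psi -> forall n,
  theory Gamma (chain T psi n) /\ ~ chain T psi n psi /\
  (forall x, chain T psi n x -> chain T psi (S n) x).
Proof.
  intros HT Hpsi n. induction n as [|n IH].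
  - simpl. split; auto. split; auto.
    apply (step Gamma T (ext T (enum 0)) psi HT Hpsi (ext_theory _ _ _ HT)).
    intros; apply ext_sup with Gamma; auto.
  - destruct IH as [H1 [H2 _]].
    destruct (step Gamma _ _ psi H1 H2 (ext_theory _ _ (enum n) H1)
                (fun x => ext_sup _ _ _ _ H1)) as [G1 [G2 _]].
    split; [exact G1|]. split; [exact G2|].
    destruct (step Gamma _ _ psi G1 G2 (ext_theory _ _ (enum (S n)) G1)
                (fun x => ext_sup _ _ _ _ G1)) as [_ [_ G3]].
    exact G3.
Qed.

Lemma chain_mono Gamma T psi : theory Gamma T -> ~ T psi -> forall n m x,
  n <= m -> chain T psi n x -> chain T psi m x.
Proof.
  intros HT Hpsi n m x Hle. induction Hle; auto.
  intro H. apply (chain_props Gamma T psi HT Hpsi m); auto.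
Qed.

Lemma lindenbaum Gamma T psi : theory Gamma T -> ~ T psi ->
  exists S, prime Gamma S /\ (forall x, T x -> S x) /\ ~ S psi.
Proof.
  intros HT Hpsi. pose proof (chain_props Gamma T psi HT Hpsi) as CP.
  pose proof (chain_mono Gamma T psi HT Hpsi) as CM.
  exists (fun x => exists n, chain T psi n x).
  assert (Hth : theory Gamma (fun x => exists n, chain T psi n x)).
  { split.
    - intros f Hf. exists 0. simpl. apply (th_L _ _ _ HT Hf).
    - intros a b [n Hn] [m Hm]. exists (max n m).
      apply (th_mp Gamma _ a b (proj1 (CP (max n m)))).
      + apply CM with n; auto; lia.
      + apply CM with m; auto; lia. }
  assert (Hnp : ~ (exists n, chain T psi n psi)).
  { intros [n Hn]. apply (proj1 (proj2 (CP n))); auto. }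
  split; [|split; [intros x Hx; exists 0; exact Hx|exact Hnp]].
  split; [exact Hth|split].
  - intros [n Hn]. apply Hnp. exists n.
    apply (th_mp Gamma _ Bot psi (proj1 (CP n))); auto.
    apply (th_ax Gamma _ _ (proj1 (CP n))). apply ipc_Bot.
  - intros a b [n Hn].
    assert (Key : forall c, ~ (exists n, chain T psi n c) ->
               chain T psi (enc c) (Imp c psi)).
    { intros c Hc. apply NNPP. intro Hc'. apply Hc. exists (S (enc c)).
      simpl. rewrite enum_surj. split.
      - intro H; contradiction.
      - intros _. apply ext_self with Gamma. apply (CP (enc c)). }
    destruct (classic (exists n, chain T psi n a)) as [Ha|Ha]; [left; auto|].
    destruct (classic (exists n, chain T psi n b)) as [Hb|Hb]; [right; auto|].
    exfalso. apply Hnp. exists (max n (max (enc a) (enc b))).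
    set (k := max n (max (enc a) (enc b))).
    assert (Tk : theory Gamma (chain T psi k)) by apply CP.
    apply (th_mp Gamma _ (Or a b) psi Tk); [|apply CM with n; auto; lia].
    apply (th_mp Gamma _ (Imp b psi) _ Tk); [|apply CM with (enc b); auto; lia].
    apply (th_mp Gamma _ (Imp a psi) _ Tk); [|apply CM with (enc a); auto; lia].
    apply (th_ax Gamma _ _ Tk). apply ipc_OrE.
Qed.
Definition PT Gamma := {D : form -> Prop | prime Gamma D}.

Lemma pt_th Gamma (x : PT Gamma) : theory Gamma (proj1_sig x).
Proof. exact (proj1 (proj2_sig x)). Qed.
Lemma pt_cons Gamma (x : PT Gamma) : ~ proj1_sig x Bot.
Proof. exact (proj1 (proj2 (proj2_sig x))). Qed.
Lemma pt_prime Gamma (x : PT Gamma) a b : proj1_sig x (Or a b) -> proj1_sig x a \/ proj1_sig x b.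
Proof. exact (proj2 (proj2 (proj2_sig x)) a b). Qed.

Lemma and_mem Gamma T a b : theory Gamma T -> (T (And a b) <-> T a /\ T b).
Proof.
  intros HT; split.
  - intro H; split; (eapply th_mp; [exact HT| |exact H]); eapply th_ax; eauto; constructor.
  - intros [Ha Hb]. eapply th_mp; [exact HT| |exact Hb].
    eapply th_mp; [exact HT| |exact Ha]. eapply th_ax; eauto; constructor.
Qed.

Lemma or_mem Gamma (x : PT Gamma) a b :
  proj1_sig x (Or a b) <-> proj1_sig x a \/ proj1_sig x b.
Proof.
  split; [apply pt_prime|]. pose proof (pt_th _ x) as HT.
  intros [H|H]; (eapply th_mp; [exact HT| |exact H]); eapply th_ax; eauto; constructor.
Qed.

Lemma imp_lemma Gamma (x : PT Gamma) a b :
  (forall y : PT Gamma, (forall f, proj1_sig x f -> proj1_sig y f) ->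
     proj1_sig y a -> proj1_sig y b) <-> proj1_sig x (Imp a b).
Proof.
  pose proof (pt_th _ x) as HT. split.
  - intro H. apply NNPP; intro Hn.
    destruct (lindenbaum Gamma (ext (proj1_sig x) a) b (ext_theory _ _ _ HT) Hn)
      as [S [HS [Hsub HSb]]].
    apply HSb. apply (H (exist _ S HS)); simpl.
    + intros f Hf; apply Hsub, ext_sup with Gamma; auto.
    + apply Hsub, ext_self with Gamma; auto.
  - intros H y Hxy Ha. eapply th_mp; [apply pt_th| |exact Ha]. auto.
Qed.

Lemma sem_equiv Gamma a b :
  (forall z : PT Gamma, proj1_sig z a -> proj1_sig z b) -> ICK Gamma (Imp a b).
Proof.
  intro H. apply NNPP; intro Hn.
  destruct (lindenbaum Gamma (ext (ICK Gamma) a) b (ext_theory _ _ _ (L_theory Gamma)) Hn)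
      as [S [HS [Hsub HSb]]].
  apply HSb. apply (H (exist _ S HS)); simpl.
  apply Hsub, ext_self with Gamma. apply L_theory.
Qed.

Lemma th_iff_l Gamma T a b : theory Gamma T -> T (Iff a b) -> T a -> T b.
Proof. intros HT H Ha. apply (and_mem Gamma T _ _ HT) in H. eapply th_mp; eauto. apply H. Qed.
Lemma th_iff_r Gamma T a b : theory Gamma T -> T (Iff a b) -> T b -> T a.
Proof. intros HT H Ha. apply (and_mem Gamma T _ _ HT) in H. eapply th_mp; eauto. apply H. Qed.

Lemma L_iff Gamma a b : ICK Gamma (Imp a b) -> ICK Gamma (Imp b a) -> ICK Gamma (Iff a b).
Proof. intros; apply (and_mem Gamma _ _ _ (L_theory Gamma)); auto. Qed.

Lemma C_inst Gamma c a b :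
  ICK Gamma (Iff (Cond c (And a b)) (And (Cond c a) (Cond c b))).
Proof.
  exact (ICK_subst Gamma (fun n => match n with 0 => c | 1 => a | _ => b end) _ (ICK_C Gamma)).
Qed.

Lemma N_inst Gamma c : ICK Gamma (Iff (Cond c Top) Top).
Proof. exact (ICK_subst Gamma (fun _ => c) _ (ICK_N Gamma)). Qed.

Lemma mono_cond Gamma T c a b : theory Gamma T -> ICK Gamma (Imp a b) ->
  T (Cond c a) -> T (Cond c b).
Proof.
  intros HT Hab Ha.
  assert (H1 : ICK Gamma (Imp a (And a b))).
  { apply (ICK_mp _ (Imp a b)); auto. apply (ICK_mp _ (Imp a (Imp b (And a b)))).
    - apply ICK_ipc, ipc_S.
    - apply ICK_ipc, ipc_AndI. }
  assert (H2 : ICK Gamma (Iff a (And a b))).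
  { apply L_iff; auto. apply ICK_ipc, ipc_AndE1. }
  apply ICK_congR with (c := c) in H2.
  assert (H3 : T (Cond c (And a b))) by (eapply th_iff_l; [exact HT| |exact Ha]; eapply th_L; eauto).
  eapply th_iff_l in H3; [|exact HT|eapply th_L; [exact HT|apply C_inst]].
  apply (and_mem Gamma T _ _ HT) in H3. apply H3.
Qed.

Lemma theta_theory Gamma T c : theory Gamma T -> theory Gamma (fun x => T (Cond c x)).
Proof.
  intros HT. split.
  - intros f Hf. apply mono_cond with Gamma Top; auto.
    + apply (ICK_mp _ f); auto. apply ICK_ipc, ipc_K.
    + eapply th_iff_r; [exact HT|eapply th_L; [exact HT|apply N_inst]|].
      eapply th_ax; [exact HT|apply ipc_Bot].
  - intros a b H1 H2. apply mono_cond with Gamma (And (Imp a b) a); auto.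
    + apply (ICK_mp _ (Imp (And (Imp a b) a) a)); [|apply ICK_ipc, ipc_AndE2].
      apply (ICK_mp _ (Imp (And (Imp a b) a) (Imp a b))); [|apply ICK_ipc, ipc_AndE1].
      apply ICK_ipc, ipc_S.
    + eapply th_iff_r; [exact HT|eapply th_L; [exact HT|apply C_inst]|].
      apply (and_mem Gamma T _ _ HT); auto.
Qed.

Definition Rc Gamma (a : PT Gamma -> Prop) (x y : PT Gamma) : Prop :=
  forall c, (forall z, a z <-> proj1_sig z c) ->
    forall d, proj1_sig x (Cond c d) -> proj1_sig y d.

Lemma cond_lemma Gamma (a : PT Gamma -> Prop) c d x :
  (forall z, a z <-> proj1_sig z c) ->
  ((forall y, Rc Gamma a x y -> proj1_sig y d) <-> proj1_sig x (Cond c d)).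
Proof.
  intros Ha. pose proof (pt_th _ x) as HT. split.
  - intro H. apply NNPP; intro Hn.
    destruct (lindenbaum Gamma _ d (theta_theory Gamma _ c HT) Hn) as [S [HS [Hsub HSd]]].
    apply HSd. apply (H (exist _ S HS)); simpl.
    intros c' Ha' e He. apply Hsub.
    assert (E : ICK Gamma (Iff c' c)).
    { apply L_iff; apply sem_equiv; intros z Hz.
      - apply Ha, Ha', Hz.
      - apply Ha', Ha, Hz. }
    apply ICK_congL with (c := e) in E.
    eapply th_iff_l; [exact HT|eapply th_L; [exact HT|exact E]|exact He].
  - intros H y Hy. apply (Hy c Ha d H).
Qed.

Definition CF (Gamma : form -> Prop) : gframe.
Proof.
  refine {| W := PT Gamma;
            le := fun x y => forall f, proj1_sig x f -> proj1_sig y f;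
            adm := fun a => exists c, forall z, a z <-> proj1_sig z c;
            R := Rc Gamma |}.
  - auto.
  - auto.
  - intros [X HX] [Y HY]; simpl; intros H1 H2.
    assert (X = Y) by (extensionality f; apply propositional_extensionality; split; auto).
    subst. f_equal. apply proof_irrelevance.
  - intros a [c Hc] x y Hxy Hx. apply Hc, Hxy, Hc, Hx.
  - exists Top. intro z; split; auto. intros _. eapply th_ax; [apply pt_th|apply ipc_Bot].
  - exists Bot. intro z; split; [intros []|intro H; apply (pt_cons _ z H)].
  - intros a b [c Hc] [d Hd]. exists (And c d). intro z.
    rewrite (and_mem Gamma _ _ _ (pt_th _ z)), Hc, Hd. tauto.
  - intros a b [c Hc] [d Hd]. exists (Or c d). intro z.
    rewrite or_mem, Hc, Hd. tauto.
  - intros a b [c Hc] [d Hd]. exists (Imp c d). intro z.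
    rewrite <- imp_lemma. split; intros H y Hzy Hy; apply Hd; apply H; auto; apply Hc; auto.
  - intros a b [c Hc] [d Hd]. exists (Cond c d). intro z.
    rewrite <- (cond_lemma Gamma a c d z Hc).
    split; intros H y Hy; apply Hd; apply H; auto.
  - intros a _ x x' y Hxx' Hy. exists y. split; auto.
    intros c Hc d Hd. apply (Hy c Hc d). auto.
Defined.

Lemma truth Gamma V (s : nat -> form) :
  (forall n z, V n z <-> proj1_sig z (s n)) ->
  forall g (z : PT Gamma), interp (CF Gamma) V g z <-> proj1_sig z (subst s g).
Proof.
  intros Hs g. induction g; intro z; simpl.
  - apply Hs.
  - split; [intros []|intro H; apply (pt_cons _ z H)].
  - rewrite IHg1, IHg2, (and_mem Gamma _ _ _ (pt_th _ z)). tauto.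
  - rewrite IHg1, IHg2, or_mem. tauto.
  - rewrite <- imp_lemma. split; intros H y Hzy Hy.
    + apply IHg2. apply H; auto. apply IHg1; auto.
    + apply IHg2. apply H; auto. apply IHg1; auto.
  - rewrite <- (cond_lemma Gamma _ (subst s g1) (subst s g2) z IHg1).
    split; intros H y Hy; apply IHg2; apply H; auto.
Qed.

Lemma subst_id f : subst Var f = f.
Proof. induction f; simpl; try rewrite IHf1, IHf2; reflexivity. Qed.

Lemma complete Gamma f : (forall F, validates F Gamma -> valid F f) -> ICK Gamma f.
Proof.
  intro H. apply NNPP; intro Hn.
  destruct (lindenbaum Gamma (ICK Gamma) f (L_theory Gamma) Hn) as [S [HS [_ HSf]]].
  assert (Hv : validates (CF Gamma) Gamma).
  { intros g Hg V HV z.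
    set (s := fun n => epsilon (inhabits Bot)
                 (fun c => forall z : PT Gamma, V n z <-> proj1_sig z c)).
    assert (Hs : forall n z, V n z <-> proj1_sig z (s n)).
    { intro n. apply (epsilon_spec (inhabits Bot)
                 (fun c => forall z : PT Gamma, V n z <-> proj1_sig z c)). apply HV. }
    apply (truth Gamma V s Hs). eapply th_L; [apply pt_th|].
    apply ICK_subst, ICK_Gamma, Hg. }
  specialize (H (CF Gamma) Hv (fun n (z : PT Gamma) => proj1_sig z (Var n))).
  assert (Hval : valuation (CF Gamma) (fun n (z : PT Gamma) => proj1_sig z (Var n))).
  { intro n. exists (Var n). intro z; tauto. }
  specialize (H Hval (exist _ S HS)).
  apply (truth Gamma _ Var (fun n z => iff_refl _)) in H.
  rewrite subst_id in H. apply HSf. exact H.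
Qed.

Theorem theorem4p25 (Gamma : form -> Prop) :
  forall f : form,
    ICK Gamma f <-> (forall F : gframe, validates F Gamma -> valid F f).
Proof.
  intro f; split; [intros H F HF; apply (sound Gamma f H F HF)|apply complete].
Qed.
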